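(* Let $p\ge5$, $n\ge 0$, and let $\mu<\nu$ be two integers in $\{M_{n-1}+1,\dots,M_n\}$ whose metallic codes both end with the digit $0$, such that no integer strictly between $\mu$ and $\nu$ has a metallic code ending with $0$. Then $\nu-\mu=p-3$ if and only if the metallic code of $\nu$ ends with at least two zeros (i.e. is of the form $w\,0^k$ with $k\ge 2$); otherwise $\nu-\mu=p-2$.
   Context: $p\ge5$ is a fixed integer. Metallic numbers: $m_{-1}=0$, $m_0=1$, $m_{n+2}=(p-2)m_{n+1}-m_n$; $M_n=\sum_{k=0}^n m_k$ and $M_{-1}=0$. Write $d=p-3$, $c=p-4$. The metallic code of a positive integer $n$ is the unique word $a_k\cdots a_0$ over the digits $\{0,\dots,p-3\}$ with $a_k\neq 0$, $n=\sum_i a_i m_i$, and containing no factor $d\,c^j\,d$ ($j\ge0$). (The set $\{M_{n-1}+1,\dots,M_n\}$ is the level $n$ of the white metallic tree.) *)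

(* Defs.v *)
From mathcomp Require Import all_boot.
Set Implicit Arguments. Unset Strict Implicit. Unset Printing Implicit Defensive.

(* mshift p k = m_{k-1}: mshift p 0 = m_{-1} = 0, mshift p 1 = m_0 = 1,
   mshift p (k+2) = (p-2) * mshift p (k+1) - mshift p k.
   (For p >= 5 the sequence is increasing, so truncated subtraction is exact.) *)
Fixpoint mshift (p k : nat) : nat :=
  match k with
  | 0 => 0
  | 1 => 1
  | (k'.+1 as k1).+1 => (p - 2) * mshift p k1 - mshift p k'
  end.

Definition metal (p i : nat) : nat := mshift p i.+1.

(* Msum p k = M_{k-1} = \sum_{i < k} m_i ; so M_n = Msum p n.+1, M_{-1} = Msum p 0 = 0 *)
Definition Msum (p k : nat) : nat := \sum_(i < k) metal p i.

(* A word a_k ... a_0 is represented by the list s = [:: a_0; a_1; ...; a_k]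
   (least significant digit first). *)
Definition word_value (p : nat) (s : seq nat) : nat :=
  \sum_(i < size s) nth 0 s i * metal p i.

(* the forbidden factor d c^j d (d = p-3, c = p-4); it is a palindrome, so being a
   factor of a_k...a_0 is the same as being a factor of the reversed list s *)
Definition forbidden_factor (p j : nat) : seq nat :=
  (p - 3) :: nseq j (p - 4) ++ [:: p - 3].

Definition is_metallic_code (p : nat) (s : seq nat) (x : nat) : Prop :=
  [/\ all (fun a => a <= p - 3) s,
      s != [::] /\ last 0 s != 0,
      word_value p s = x
    & forall j, ~~ infix (forbidden_factor p j) s].

Definition ends_with_0 (s : seq nat) : Prop := exists t, s = 0 :: t.
Definition ends_with_00 (s : seq nat) : Prop := exists t, s = 0 :: 0 :: t.

(* Main.v *)
Require Import Defs.
From mathcomp Require Import all_boot zify.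
Set Implicit Arguments. Unset Strict Implicit. Unset Printing Implicit Defensive.

Definition allowed (p : nat) (st : bool) (a : nat) := (a <= p - 3) && ~~ (st && (a == p - 3)).
Definition nxt (p : nat) (st : bool) (a : nat) : bool :=
  if a == p - 3 then true else if a == p - 4 then st else false.
Fixpoint okw (p : nat) (st : bool) (r : seq nat) : bool :=
  match r with [::] => true | a :: r' => allowed p st a && okw p (nxt p st a) r' end.
Fixpoint val (p : nat) (r : seq nat) : nat :=
  match r with [::] => 0 | a :: r' => a * mshift p (size r').+1 + val p r' end.

Lemma val_cons p a r : val p (a :: r) = a * mshift p (size r).+1 + val p r.
Proof. by []. Qed.

Lemma mshiftSS p k : mshift p k.+2 = (p - 2) * mshift p k.+1 - mshift p k.
Proof. by []. Qed.

Lemma mshift_lt p k : 5 <= p -> mshift p k < mshift p k.+1.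
Proof.
move=> hp; elim: k => [|k IH]; first by [].
rewrite mshiftSS.
have h : (p - 2) * mshift p k.+1 >= 3 * mshift p k.+1 by apply: leq_mul => //; lia.
lia.
Qed.

Lemma okw_weak p st r : okw p st r -> okw p false r.
Proof.
elim: r st => [|a r IH] st //= /andP[ha hr]; apply/andP; split.
  by move: ha; rewrite /allowed => /andP[-> _].
move: hr; rewrite /nxt; case: (a == p - 3) => //; case: (a == p - 4) => //; exact: IH.
Qed.

Lemma mulsplit (p M a b k : nat) : a <= p -> b + k = a -> (p - b) * M = (p - a) * M + k * M.
Proof. move=> h h'; rewrite -mulnDl; congr (_ * _); lia. Qed.

Lemma bound p st r : 5 <= p -> okw p st r -> val p r + st * mshift p (size r) < mshift p (size r).+1.
Proof.
move=> hp; elim: r st => [|a r IH] st; first by case: st.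
move=> H; change (is_true (allowed p st a && okw p (nxt p st a) r)) in H.
change (a * mshift p (size r).+1 + val p r + st * mshift p (size r).+1 < mshift p (size r).+2).
move/andP: H => [ha hr]; have := IH _ hr; clear hr.
have hm := mshift_lt (size r) hp.
rewrite mshiftSS.
have e2 := @mulsplit p (mshift p (size r).+1) 4 2 2 ltac:(lia) ltac:(lia).
have e3 := @mulsplit p (mshift p (size r).+1) 4 3 1 ltac:(lia) ltac:(lia).
have e4 := @mulsplit p (mshift p (size r).+1) 5 4 1 ltac:(lia) ltac:(lia).
set M1 := mshift p (size r).+1; set M0 := mshift p (size r).
move: ha; rewrite /allowed /nxt => /andP[ha hst].
case: eqP => [aD|aD].
  subst a; move: hst; rewrite eqxx; case: st => //= _ h; lia.
case: eqP => [aC|aC].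
  subst a; clear hst; case: st => /= h; lia.
move=> h.
have : a * M1 <= (p - 5) * M1 by apply: leq_mul => //; lia.
clear hst; case: st => /=; lia.
Qed.

Lemma exists_word p k (st : bool) x : 5 <= p -> x + st * mshift p k < mshift p k.+1 ->
  exists w, [/\ size w = k, okw p st w & val p w = x].
Proof.
move=> hp; elim: k st x => [|k IH] st x.
  rewrite /= => h; exists [::]; split => //; case: st h => /=; lia.
rewrite mshiftSS => h.
have hm := mshift_lt k hp.
have hm1 := mshift_lt k.+1 hp.
have e2 := @mulsplit p (mshift p k.+1) 4 2 2 ltac:(lia) ltac:(lia).
have e3 := @mulsplit p (mshift p k.+1) 4 3 1 ltac:(lia) ltac:(lia).
have M1pos : 0 < mshift p k.+1 by lia.
have hC : p - 4 != p - 3 by apply/eqP; lia.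
case: (ltnP x ((p - 4) * mshift p k.+1)) => h1.
  have [w [sw ow vw]] := IH false (x %% mshift p k.+1) ltac:(rewrite /= mul0n addn0 ltn_pmod //).
  have ha : x %/ mshift p k.+1 < p - 4 by rewrite ltn_divLR.
  exists (x %/ mshift p k.+1 :: w); split; first by rewrite /= sw.
    rewrite /=.
    have hn : nxt p st (x %/ mshift p k.+1) = false.
      by rewrite /nxt; case: eqP => [|_]; [lia|case: eqP => [|_]; [lia|]].
    rewrite hn ow andbT /allowed; apply/andP; split; first lia.
    by apply/negP => /andP[_ /eqP]; lia.
  by rewrite val_cons sw vw -divn_eq.
case: (ltnP x ((p - 3) * mshift p k.+1)) => h2.
  have hh : x - (p - 4) * mshift p k.+1 + st * mshift p k < mshift p k.+1.
    by case: st h => h; rewrite ?mul1n ?mul0n in h *; lia.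
  have [w [sw ow vw]] := IH st (x - (p - 4) * mshift p k.+1) hh.
  exists (p - 4 :: w); split; first by rewrite /= sw.
    rewrite /=.
    rewrite /nxt (negbTE hC) eqxx ow andbT /allowed; apply/andP; split; first lia.
    by rewrite (negbTE hC) andbF.
  rewrite val_cons sw vw; lia.
have hst : st = false by case: st h => // h; rewrite ?mul1n in h; lia.
subst st.
have [w [sw ow vw]] := IH true (x - (p - 3) * mshift p k.+1) ltac:(rewrite mul1n; lia).
exists (p - 3 :: w); split; first by rewrite /= sw.
    rewrite /=.
  by rewrite /nxt eqxx ow andbT /allowed leqnn.
rewrite val_cons sw vw; lia.
Qed.

Fixpoint lexlt (r q : seq nat) : bool :=
  match r, q with
  | a :: r', b :: q' => (a < b) || ((a == b) && lexlt r' q')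
  | _, _ => false
  end.

Lemma lex_mono p r q : 5 <= p -> size r = size q -> okw p false r -> okw p false q ->
  lexlt r q -> val p r < val p q.
Proof.
move=> hp; elim: r q => [|a r IH] [|b q] // [hs] /andP[_ hr] /andP[_ hq].
rewrite !val_cons; case/orP => [hab|/andP[/eqP eab hl]].
  have := bound hp hr; rewrite hs => hb.
  have : a.+1 * mshift p (size q).+1 <= b * mshift p (size q).+1 by apply: leq_mul.
  rewrite mulSn; lia.
subst b; rewrite hs; have := IH q hs (okw_weak hr) (okw_weak hq) hl; lia.
Qed.

Lemma lex_irr r : lexlt r r = false.
Proof. by elim: r => //= a r ->; rewrite ltnn eqxx. Qed.

Lemma lex_tri r q : size r = size q -> r != q -> lexlt r q || lexlt q r.
Proof.
elim: r q => [|a r IH] [|b q] //= [hs]; rewrite eqseq_cons negb_and => hne.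
case: (ltngtP a b) => //= hab; subst b.
by apply: IH; move: hne; rewrite eqxx.
Qed.

Lemma lex_of_val p r q : 5 <= p -> size r = size q -> okw p false r -> okw p false q ->
  val p r < val p q -> lexlt r q.
Proof.
move=> hp hs hr hq hv; case: (eqVneq r q) => [e|ne].
  by subst; rewrite ltnn in hv.
case/orP: (lex_tri hs ne) => // h.
have := lex_mono hp (esym hs) hq hr h; lia.
Qed.

Lemma lex_rcons r q a b : size r = size q ->
  lexlt (rcons r a) (rcons q b) = lexlt r q || ((r == q) && (a < b)).
Proof.
elim: r q => [|x r IH] [|y q] //= hs; first by rewrite andbF orbF.
case: hs => hs; rewrite IH // eqseq_cons.
by case: (x < y); case: (x == y); case: (lexlt r q).
Qed.

Lemma okw_rcons p (st : bool) r a : okw p st (rcons r a) = okw p st r && allowed p (foldl (nxt p) st r) a.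
Proof. by elim: r st => [|b r IH] st /=; rewrite ?andbT // IH andbA. Qed.

Lemma val_rcons p r a : val p (rcons r a) = val p (rcons r 0) + a.
Proof.
elim: r => [|b r IH] /=; first by rewrite muln1 !addn0.
by rewrite !size_rcons IH addnA.
Qed.

Lemma val_pad p z r : val p (nseq z 0 ++ r) = val p r.
Proof. by elim: z. Qed.

Lemma okw_pad p z r : 5 <= p -> okw p false (nseq z 0 ++ r) = okw p false r.
Proof.
move=> hp; elim: z => //= z IH.
have h3 : (0 == p - 3) = false by apply/eqP; lia.
rewrite /nxt /allowed h3 /=; by case: (0 == p - 4).
Qed.

Lemma wv_rev p s : word_value p s = val p (rev s).
Proof.
elim/last_ind: s => [|s a IH]; first by rewrite /word_value big_ord0.
rewrite rev_rcons /= size_rev -IH /word_value size_rcons big_ord_recr /=.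
rewrite nth_rcons ltnn eqxx addnC; congr (_ + _).
apply: eq_bigr => i _; by rewrite nth_rcons ltn_ord.
Qed.

Lemma okw_true p l : 5 <= p ->
  okw p true l <-> okw p false l /\ (forall j, ~~ prefix (nseq j (p - 4) ++ [:: p - 3]) l).
Proof.
move=> hp; elim: l => [|b l IH].
  by split => // _; split => // -[].
have hCD : (p - 4 == p - 3) = false by apply/eqP; lia.
rewrite [okw p true _]/= [okw p false _]/= /allowed /nxt.
case: (eqVneq b (p - 3)) => [->|hbD].
  rewrite /= andbF /=; split => // -[_ /(_ 0)]; by rewrite /= eqxx prefix0s.
rewrite /=.
case: (eqVneq b (p - 4)) => [->|hbC] /=.
  have h0 : p - 4 <= p - 3 by lia.
  rewrite h0 /= IH; split.
    move=> [h1 h2]; split => // -[|j] /=; first by rewrite eq_sym hCD.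
    by rewrite eqxx /=.
  move=> [h1 h2]; split => // j; have := h2 j.+1; by rewrite /= eqxx.
split.
  move=> h; split => // -[|j] /=; first by rewrite eq_sym (negbTE hbD).
  by rewrite eq_sym (negbTE hbC).
by case.
Qed.

Lemma okw_char p l : 5 <= p ->
  okw p false l <-> all (fun a => a <= p - 3) l /\ (forall j, ~~ infix (forbidden_factor p j) l).
Proof.
move=> hp; elim: l => [|b l IH].
  by split => // _; split => // j; rewrite infixs0.
rewrite /forbidden_factor in IH *.
rewrite [okw p false _]/= /allowed /nxt /=.
case: (eqVneq b (p - 3)) => [->|hbD].
  rewrite leqnn /= okw_true // IH; split.
    move=> [[h1 h2] h3]; split => // j; rewrite negb_or h3 /=; exact: h2.
  move=> [h1 h2]; split; [split => // j | move=> j]; have := h2 j;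
    by rewrite negb_or => /andP[].
have -> : (if b == p - 4 then false else false) = false by case: (b == p - 4).
split.
  move=> /andP[/andP[hb _] /IH [h1 h2]]; split; first by rewrite hb.
  move=> j; exact: h2.
move=> [/andP[hb h1] h2]; rewrite hb /=; apply/IH; split => // j; exact: h2.

Qed.

Lemma step_up p (st : bool) a : 5 <= p -> allowed p st a -> allowed p (nxt p st a) (p - 3) ->
  a < p - 3 /\ allowed p st a.+1.
Proof.
move=> hp; rewrite /allowed /nxt eqxx andbT leqnn /=.
case: (eqVneq a (p - 3)) => [->|h3] /=; first by move=> _.
case: (eqVneq a (p - 4)) => [->|h4] /=.
  case: st => //= _ _; split; [lia|]; apply/andP; split; [lia|by []].
move=> /andP[ha _] _; split; [lia|]; apply/andP; split; first lia.
apply/negP => /andP[_ /eqP]; lia.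
Qed.

Lemma step_contra p (st : bool) a : 5 <= p -> allowed p st a -> allowed p st a.+1 ->
  allowed p (nxt p st a) (p - 3).
Proof.
move=> hp; rewrite /allowed /nxt eqxx andbT leqnn /=.
case: (eqVneq a (p - 3)) => [->|h3] /=; first by move=> _ /andP[]; lia.
case: (eqVneq a (p - 4)) => [->|h4] //=.
case: st => //= _ /andP[_]; have -> : (p - 4).+1 = p - 3 by lia.
by rewrite eqxx.
Qed.

Lemma allowed_lt p (st : bool) a : 5 <= p -> a < p - 3 -> allowed p st a.
Proof. move=> hp h; rewrite /allowed; apply/andP; split; [lia|]; apply/negP => /andP[_ /eqP]; lia. Qed.

Lemma rev_ff p j : rev (forbidden_factor p j) = forbidden_factor p j.
Proof. by rewrite /forbidden_factor rev_cons rev_cat rev_nseq /= -cats1 -cat_cons. Qed.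

Lemma code_okw p s x : 5 <= p -> is_metallic_code p s x -> okw p false (rev s) /\ val p (rev s) = x.
Proof.
move=> hp [ha _ hv hi]; split; last by rewrite -wv_rev.
apply/okw_char => //; split; first by rewrite all_rev.
by move=> j; rewrite -rev_ff infix_rev.
Qed.

Lemma okw_code p X : 5 <= p -> okw p false X -> head 0 X != 0 -> is_metallic_code p (rev X) (val p X).
Proof.
move=> hp ho hh; have [ha hi] := (okw_char X hp).1 ho; split.
- by rewrite all_rev.
- by case: X hh {ho ha hi} => // a X /= h; rewrite rev_cons last_rcons; split => //; case: (rev X).
- by rewrite wv_rev revK.
- by move=> j; rewrite -rev_ff infix_rev.
Qed.

Lemma strip (X : seq nat) : exists z X', X = nseq z 0 ++ X' /\ (X' = [::] \/ head 0 X' != 0).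
Proof.
elim: X => [|a X [z [X' [e h]]]]; first by exists 0, [::]; split => //; left.
case: (eqVneq a 0) => [->|ha]; first by exists z.+1, X'; rewrite e.
by exists 0, (a :: X); split => //; right.
Qed.

Theorem lemma4 (p n mu nu : nat) (smu snu : seq nat) :
  5 <= p ->
  Msum p n < mu -> mu < nu -> nu <= Msum p n.+1 ->
  is_metallic_code p smu mu -> is_metallic_code p snu nu ->
  ends_with_0 smu -> ends_with_0 snu ->
  (forall x s, mu < x < nu -> is_metallic_code p s x -> ~ ends_with_0 s) ->
  (nu - mu = p - 3 <-> ends_with_00 snu) /\
  (~ ends_with_00 snu -> nu - mu = p - 2).
Proof.
move=> hp _ hlt _ cmu cnu [t et] [t' et'] H.
subst smu snu.
have [omu vmu] := code_okw hp cmu.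
have [onu vnu] := code_okw hp cnu.
case: t cmu omu vmu => [|a t1] cmu omu vmu; first by case: cmu => _ [_].
case: t' cnu onu vnu => [|b t2] cnu onu vnu; first by case: cnu => _ [_].
have e00 : ends_with_00 [:: 0, b & t2] <-> b = 0.
  by split; [case=> x [] | move=> ->; exists t2].
rewrite e00; clear e00.
set K := maxn (size (a :: t1)) (size (b :: t2)).
set W := nseq (K - size (a :: t1)) 0 ++ rev t1.
set Z := nseq (K - size (b :: t2)) 0 ++ rev t2.
have K1 : 0 < K by rewrite /K /=; lia.
have sW : size W = K.-1.
  by rewrite /W size_cat size_nseq size_rev /= /K /=; lia.
have sZ : size Z = K.-1 by rewrite /Z size_cat size_nseq size_rev /= /K /=; lia.
have eT : rcons (rcons W a) 0 = nseq (K - size (a :: t1)) 0 ++ rev [:: 0, a & t1].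
  by rewrite /W !rev_cons !rcons_cat.
have eT' : rcons (rcons Z b) 0 = nseq (K - size (b :: t2)) 0 ++ rev [:: 0, b & t2].
  by rewrite /Z !rev_cons !rcons_cat.
have oT : okw p false (rcons (rcons W a) 0) by rewrite eT okw_pad.
have vT : val p (rcons (rcons W a) 0) = mu by rewrite eT val_pad.
have oT' : okw p false (rcons (rcons Z b) 0) by rewrite eT' okw_pad.
have vT' : val p (rcons (rcons Z b) 0) = nu by rewrite eT' val_pad.
clear eT eT' cmu omu vmu onu vnu.
clearbody W Z.
set T := rcons W a.
have eTd : T = rcons W a by [].
clearbody T.
rewrite -eTd in oT vT.
have sT : size T = size (rcons Z b) by rewrite ?eTd !size_rcons sW sZ.
have oT0 : okw p false T by move: oT; rewrite okw_rcons => /andP[].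
have oT0' : okw p false (rcons Z b) by move: oT'; rewrite okw_rcons => /andP[].
have lTT' : lexlt T (rcons Z b).
  have hs : size (rcons T 0) = size (rcons (rcons Z b) 0) by rewrite ?eTd !size_rcons sW sZ.
  have := lex_of_val hp hs oT oT'; rewrite vT vT' => /(_ hlt).
  by rewrite lex_rcons // ltnn andbF orbF.
have okT : forall i, i < p - 3 -> okw p false (rcons T i).
  by move=> i hi; rewrite okw_rcons oT0 allowed_lt.
have valT : forall i, val p (rcons T i) = mu + i by move=> i; rewrite val_rcons vT.
have [a0 [oa va ga hb]] : exists a0, [/\ okw p false (rcons T a0), val p (rcons T a0) = mu + a0,
    a0 = (if okw p false (rcons T (p - 3)) then p - 3 else p - 4)
  & forall c, a0 < c -> ~~ okw p false (rcons T c)].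
  have big : forall c, p - 3 < c -> ~~ okw p false (rcons T c).
    move=> c hc; rewrite okw_rcons /allowed.
    have -> : (c <= p - 3) = false by apply/negbTE; rewrite -ltnNge.
    by rewrite andbF.
  case E: (okw p false (rcons T (p - 3))).
    by exists (p - 3); split.
  exists (p - 4); split => //; first by apply: okT; clear -hp; lia.
  move=> c hc; case: (ltngtP c (p - 3)) => hc3; [clear -hc hc3; lia| exact: big | by rewrite hc3 E].
have lo : mu + a0 < nu.
  have hs : size (rcons T a0) = size (rcons (rcons Z b) 0) by rewrite ?eTd !size_rcons sW sZ.
  rewrite -va -vT'; apply: (lex_mono hp hs oa oT').
  by rewrite lex_rcons // lTT'.
have up : nu <= mu + a0.+1.
  rewrite leqNgt; apply/negP => hgt.
  have bnd := bound hp oT'; rewrite vT' mul0n addn0 !size_rcons sZ prednK // in bnd.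
  have [X [sX oX vX]] := @exists_word p K.+1 false (mu + a0.+1) hp ltac:(rewrite mul0n addn0; clear -hgt bnd; lia).
  case/lastP: X sX oX vX => [|Y c] sX oX vX; first by [].
  have sY : size Y = size T by move: sX; rewrite size_rcons eTd size_rcons sW prednK // => -[].
  have lx : lexlt (rcons T a0) (rcons Y c).
    have hs : size (rcons T a0) = size (rcons Y c) by rewrite !size_rcons sY.
    apply: (lex_of_val hp hs oa oX); by rewrite va vX; clear; lia.
  rewrite lex_rcons // in lx.
  have lTY : lexlt T Y.
    case/orP: lx => // /andP[/eqP eTY hac]; subst Y; have := hb c hac; by rewrite oX.
  have oY0 : okw p false (rcons Y 0).
    by move: oX; rewrite !okw_rcons => /andP[-> _]; rewrite allowed_lt //; clear -hp; lia.
  have c0 : c = 0.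
    case: (posnP c) => // cpos.
    have hs : size (rcons T a0) = size (rcons Y 0) by rewrite !size_rcons sY.
    have := lex_mono hp hs oa oY0.
    rewrite lex_rcons // lTY va => /(_ isT).
    move=> h1; have h2 := val_rcons p Y c; rewrite vX in h2; clear -h1 h2 cpos; lia.
  subst c.
  have [z [X' [eX hX']]] := strip (rcons Y 0).
  have vX' : val p X' = mu + a0.+1 by rewrite -(val_pad p z X') -eX.
  have X'ne : X' != [::] by case: hX' => [e|]; [subst X'; move: vX'; rewrite /=; clear; lia | move=> h; apply/negP => /eqP e; by rewrite e in h].
  have hh : head 0 X' != 0 by case: hX' => // e; rewrite e in X'ne.
  have oX' : okw p false X' by rewrite -(okw_pad z X' hp) -eX.
  have cX := okw_code hp oX' hh; rewrite vX' in cX.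
  apply: (H (mu + a0.+1) (rev X')) => //; first by apply/andP; split; [clear; lia | exact: hgt].
  clear vX' hX' hh oX' cX; case/lastP: X' eX X'ne => [|Y' c'] eX // _.
  have := congr1 (last 0) eX; rewrite -rcons_cat !last_rcons => <-.
  by exists (rev Y'); rewrite rev_rcons.
have enu : nu = mu + a0.+1 by clear -lo up; lia.
move: ga; case E: (okw p false (rcons T (p - 3))) => ga; subst a0.
-
  have hb0 : b != 0.
    apply/eqP => b0; subst b.
    move: lTT'; rewrite ?eTd lex_rcons ?sW ?sZ // ltn0 andbF orbF => lWZ.
    move: E; rewrite ?eTd !okw_rcons foldl_rcons => /andP[/andP[oW h1] h2].
    have [ha hA] := step_up hp h1 h2.
    have oV : okw p false (rcons (rcons W a.+1) 0).
      by rewrite !okw_rcons oW hA allowed_lt //; clear -hp; lia.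
    have hs1 : size (rcons T (p - 3)) = size (rcons (rcons W a.+1) 0) by rewrite ?eTd !size_rcons.
    have l1 := lex_mono hp hs1 oa oV.
    rewrite ?eTd lex_rcons ?size_rcons // lex_rcons // eqxx ltnSn /= orbT in l1.
    have hs2 : size (rcons (rcons W a.+1) 0) = size (rcons (rcons Z 0) 0) by rewrite !size_rcons sW sZ.
    have l2 := lex_mono hp hs2 oV oT'.
    rewrite lex_rcons ?size_rcons ?sW ?sZ // lex_rcons ?sW ?sZ // lWZ in l2.
    have := l1 isT; have := l2 isT.
    rewrite vT' -eTd va => q1 q2; clear -q1 q2 enu; lia.
  split.
    split => [|e]; [move: enu; clear -hp; lia | by rewrite e in hb0].
  move=> _; move: enu; clear -hp; lia.
-
  have hb0 : b = 0.
    apply/eqP; apply/negP => hbn.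
    move: oT0'; rewrite okw_rcons => /andP[oZ hZb].
    have hbl : b <= p - 3 by move: hZb; rewrite /allowed => /andP[].
    have oV : okw p false (rcons (rcons Z b.-1) 0).
      by rewrite !okw_rcons oZ !allowed_lt //; clear -hp hbn hbl; lia.
    have hs2 : size (rcons (rcons Z b.-1) 0) = size (rcons (rcons Z b) 0) by rewrite !size_rcons.
    have l2 := lex_mono hp hs2 oV oT'.
    rewrite lex_rcons ?size_rcons // lex_rcons // eqxx lex_irr /= in l2.
    have := l2 ltac:(apply/orP; left; clear -hbn; move: hbn; case: b => // b _; exact: ltnSn).
    have lTV : lexlt T (rcons Z b.-1).
      move: lTT'; rewrite ?eTd !lex_rcons ?sW ?sZ //.
      case/orP => [-> //|/andP[/eqP eWZ hab]]; subst Z.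
      case: (ltnP a b.-1) => hab'; first by rewrite eqxx orbT.
      have eb : b = a.+1 by clear -hab hab'; lia.
      subst b.
      move: E; rewrite ?eTd !okw_rcons foldl_rcons oZ /= => nE; suff: false by []; rewrite -nE.
      move: oT0; rewrite ?eTd okw_rcons => /andP[_ hA].
      by rewrite hA (step_contra hp hA hZb).
    have hs1 : size (rcons T (p - 4)) = size (rcons (rcons Z b.-1) 0) by rewrite !size_rcons eTd size_rcons sW sZ.
    have l1 := lex_mono hp hs1 oa oV.
    have := l1 ltac:(rewrite lex_rcons ?lTV //; by rewrite eTd !size_rcons sW sZ).
    rewrite va vT' => q1 q2; clear -q1 q2 enu; lia.
  subst b; split.
    split => // _; move: enu; clear -hp; lia.
  by move=> h; exfalso; apply: h.
Qed.
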